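(* Let $n\geq 3$, let $\alpha\in(1/2,1]$, and let $A$ and $B$ be two $n\times n$ generalized tournament matrices that are both $\alpha$-linear. Then there exists a clan $X$ of $A$ such that $\mathrm{Inv}(A,X)$ and $B$ have a common nontrivial clan.
   Context: A generalized tournament matrix of order $n$ is a real $n\times n$ matrix $M=(m_{ij})$ with nonnegative entries satisfying $M+M^{t}=J_n-I_n$. Write $[n]=\{1,\ldots,n\}$. A clan of $M$ is a subset $X\subseteq[n]$ such that for all $i,j\in X$ and $k\in[n]\setminus X$, $m_{ik}=m_{jk}$ and $m_{ki}=m_{kj}$; the empty set, singletons and $[n]$ are trivial clans. For $X\subseteq[n]$, $\mathrm{Inv}(M,X)$ is obtained from $M$ by replacing $m_{ij}$ by $m_{ji}$ for all $i,j\in X$. For $\alpha>1/2$, $M$ is $\alpha$-linear if there is an ordering $x_1,\ldots,x_n$ of $[n]$ such that $m_{x_ix_j}=\alpha$ whenever $i<j$. *)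

(* Defs.v *)
From HB Require Import structures.
From mathcomp Require Import all_boot all_order all_algebra all_fingroup.
Set Implicit Arguments. Unset Strict Implicit. Unset Printing Implicit Defensive.
Import Order.TTheory GRing.Theory Num.Theory.
Local Open Scope ring_scope.

Definition gen_tournament (R : realFieldType) (n : nat) (M : 'M[R]_n) : Prop :=
  (forall i j, 0 <= M i j) /\ M + M^T = const_mx 1 - 1%:M.

Definition clan (R : realFieldType) (n : nat) (M : 'M[R]_n) (X : {set 'I_n}) : Prop :=
  forall i j k, i \in X -> j \in X -> k \notin X -> M i k = M j k /\ M k i = M k j.

Definition trivial_set (n : nat) (X : {set 'I_n}) : bool :=
  [|| X == set0, #|X| == 1%N | X == setT].

Definition Inv (R : realFieldType) (n : nat) (M : 'M[R]_n) (X : {set 'I_n}) : 'M[R]_n :=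
  \matrix_(i, j) if (i \in X) && (j \in X) then M j i else M i j.

Definition alpha_linear (R : realFieldType) (n : nat) (alpha : R) (M : 'M[R]_n) : Prop :=
  1 / 2 < alpha /\ exists s : 'S_n, forall i j : 'I_n, (i < j)%N -> M (s i) (s j) = alpha.

(* Main.v *)
Require Import Defs.
From HB Require Import structures.
From mathcomp Require Import all_boot all_order all_algebra all_fingroup.
Import Order.TTheory GRing.Theory Num.Theory.
Local Open Scope ring_scope.

Lemma tour_entry (R : realFieldType) (n : nat) (M : 'M[R]_n) i j :
  gen_tournament M -> i != j -> M j i = 1 - M i j.
Proof.
case=> _ H ij; have := congr1 (fun N : 'M[R]_n => N i j) H; rewrite !mxE (negbTE ij) subr0.
by move=> E; rewrite -E addrC addrK.
Qed.

Lemma lin_entry (R : realFieldType) (n : nat) (alpha : R) (M : 'M[R]_n) (s : 'S_n) :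
  (forall i j : 'I_n, (i < j)%N -> M (s i) (s j) = alpha) ->
  forall y z, ((s^-1)%g y < (s^-1)%g z)%N -> M y z = alpha.
Proof. by move=> Hs y z lt; have := Hs _ _ lt; rewrite !permKV. Qed.

Arguments lin_entry {R n alpha M s} Hs {y z}.
Arguments tour_entry {R n M i j}.

Lemma lin_entry2 (R : realFieldType) (n : nat) (alpha : R) (M : 'M[R]_n) (s : 'S_n) :
  gen_tournament M ->
  (forall i j : 'I_n, (i < j)%N -> M (s i) (s j) = alpha) ->
  forall y z, ((s^-1)%g y < (s^-1)%g z)%N -> M y z = alpha /\ M z y = 1 - alpha.
Proof.
move=> G Hs y z lt; have e := lin_entry Hs lt; split => //.
rewrite (tour_entry G) ?e //; apply/negP => /eqP yz; by rewrite yz ltnn in lt.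
Qed.

Arguments lin_entry2 {R n alpha M s} G Hs {y z}.

Theorem proposition5p3 (R : realFieldType) (n : nat) (alpha : R)
    (A B : 'M[R]_n) :
  (3 <= n)%N -> 1 / 2 < alpha -> alpha <= 1 ->
  gen_tournament A -> gen_tournament B ->
  alpha_linear alpha A -> alpha_linear alpha B ->
  exists X : {set 'I_n}, clan A X /\
    exists Y : {set 'I_n}, ~~ trivial_set Y /\ clan (Inv A X) Y /\ clan B Y.
Proof.
move=> hn _ _ GA GB [_ [s Hs]] [_ [t Ht]].
have [m em] : exists m, n = m.+1 by exists n.-1; rewrite prednK // (leq_trans _ hn).
subst n.
pose x := t ord_max.
have posinj : forall y, y != x -> ((s^-1)%g y : nat) != (s^-1)%g x.
  move=> y yx; apply/negP => /eqP /val_inj /(congr1 s); rewrite !permKV => E.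
  by rewrite E eqxx in yx.
exists [set y | ((s^-1)%g x <= (s^-1)%g y)%N]; split.
  move=> i j k; rewrite !inE -ltnNge => hi hj hk.
  have [a1 a2] := lin_entry2 GA Hs (leq_trans hk hi).
  have [b1 b2] := lin_entry2 GA Hs (leq_trans hk hj).
  by rewrite a1 a2 b1 b2.
have key : forall y, y != x -> Inv A [set y | ((s^-1)%g x <= (s^-1)%g y)%N] y x = alpha /\
   Inv A [set y | ((s^-1)%g x <= (s^-1)%g y)%N] x y = 1 - alpha.
  move=> y yx; rewrite !mxE !inE leqnn !andbT.
  case: leqP => h.
    have h' : ((s^-1)%g x < (s^-1)%g y)%N by rewrite ltn_neqAle eq_sym posinj.
    have [a1 a2] := lin_entry2 GA Hs h'; by rewrite a1 a2.
  have [a1 a2] := lin_entry2 GA Hs h; by rewrite a1 a2.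
have keyB : forall y, y != x -> B y x = alpha /\ B x y = 1 - alpha.
  move=> y yx; apply: (lin_entry2 GB Ht).
  rewrite /x permK.
  have : ((t^-1)%g y != ord_max).
    apply/negP => /eqP E; have := congr1 t E; rewrite permKV => E'.
    by rewrite E' eqxx in yx.
  have := ltn_ord ((t^-1)%g y); rewrite ltnS leq_eqVlt => /orP [/eqP E|//].
  by move=> /negP []; apply/eqP/val_inj.
exists [set~ x]; split; last split.
- have c : #|[set~ x]| = m by rewrite cardsC1 card_ord.
  rewrite /trivial_set; apply/negP; case/or3P => /eqP H.
  + by move: c; rewrite H cards0 => c; rewrite -c in hn.
  + by rewrite H in c; rewrite -c in hn.
  + by move: c; rewrite H cardsT card_ord => /eqP; rewrite eqn_leq ltnn.
- move=> i j k; rewrite !in_setC1 negbK => hi hj /eqP ->.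
  have [a1 a2] := key _ hi; have [b1 b2] := key _ hj; by rewrite a1 a2 b1 b2.
- move=> i j k; rewrite !in_setC1 negbK => hi hj /eqP ->.
  have [a1 a2] := keyB _ hi; have [b1 b2] := keyB _ hj; by rewrite a1 a2 b1 b2.
Qed.
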